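(* If $X$ is a set star Hurewicz space and $Y$ is a compact space, then $X \times Y$ is rectangular set star Hurewicz.
   Context: For a subset $A$ of a space $Z$ and a collection $\mathcal{U}$ of subsets of $Z$, ${\rm St}(A,\mathcal{U}) = \bigcup\{U \in \mathcal{U}: U \cap A \neq \emptyset\}$. A space $X$ is set star Hurewicz if for each nonempty $A \subset X$ and each sequence $(\mathcal{U}_n: n\in\mathbb{N})$ of collections of sets open in $X$ with $\overline{A} \subset \bigcup\mathcal{U}_n$ for all $n$, there are finite $\mathcal{V}_n \subset \mathcal{U}_n$ such that each $x \in A$ lies in ${\rm St}(\bigcup\mathcal{V}_n,\mathcal{U}_n)$ for all but finitely many $n$. The product $X\times Y$ is rectangular set star Hurewicz if for each nonempty set of the form $A \times B \subset X \times Y$ and each sequence $(\mathcal{U}_n: n\in\mathbb{N})$ of collections of sets open in $X\times Y$ with $\overline{A\times B} \subset \bigcup\mathcal{U}_n$ for all $n$, there are finite $\mathcal{V}_n \subset \mathcal{U}_n$ such that each $z \in A \times B$ lies in ${\rm St}(\bigcup\mathcal{V}_n,\mathcal{U}_n)$ for all but finitely many $n$. *)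

(* Defs.v *)
From mathcomp Require Import all_boot all_order.
From mathcomp Require Import all_classical all_reals all_analysis.
Set Implicit Arguments. Unset Strict Implicit. Unset Printing Implicit Defensive.
Local Open Scope classical_set_scope.

Definition St (T : Type) (A : set T) (U : set (set T)) : set T :=
  \bigcup_(W in [set W | U W /\ W `&` A !=set0]) W.

Definition SSH_condition (Z : topologicalType) (A : set Z) : Prop :=
  forall U : nat -> set (set Z),
    (forall n, U n `<=` open) ->
    (forall n, closure A `<=` \bigcup_(W in U n) W) ->
    exists V : nat -> set (set Z),
      (forall n, finite_set (V n) /\ V n `<=` U n) /\
      (forall x, A x -> exists N : nat, forall n : nat, (N <= n)%N ->
          St (\bigcup_(W in V n) W) (U n) x).

Definition set_star_Hurewicz (X : topologicalType) : Prop :=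
  forall A : set X, A !=set0 -> SSH_condition A.

Definition rectangular_set_star_Hurewicz (X Y : topologicalType) : Prop :=
  forall (A : set X) (B : set Y), A `*` B !=set0 -> SSH_condition (A `*` B).

(* Main.v *)
Require Import Defs.
From mathcomp Require Import all_boot all_order.
From mathcomp Require Import all_classical all_reals all_analysis.
Local Open Scope classical_set_scope.
Lemma prodN (X Y : topologicalType) (x : X) (y : Y) (W : set (X * Y)) :
  nbhs (x, y) W -> exists Q R, nbhs x Q /\ nbhs y R /\ Q `*` R `<=` W.
Proof. by case=> [[Q R] /= [hQ hR] sub]; exists Q, R. Qed.
Lemma closure_prod {X Y : topologicalType} (A : set X) (B : set Y) x y :
  closure A x -> closure B y -> closure (A `*` B) (x, y).
Proof.
move=> cA cB W /prodN [Q [R [hQ [hR sub]]]].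
have [a [Aa Qa]] := cA _ hQ. have [b [Bb Rb]] := cB _ hR.
by exists (a, b); split => //; apply: sub.
Qed.
From HB Require Import structures.
From mathcomp Require Import finmap.
Section PY.
Variables (Y : topologicalType) (y0 : Y).
Definition pY : Type := Y.
HB.instance Definition _ := Topological.copy pY Y.
HB.instance Definition _ := isPointed.Build pY y0.
Lemma compact_cover_Y (K : set Y) : compact K -> cover_compact K.
Proof. move=> cK. have := (@compact_cover [the ptopologicalType of pY]). move=> E.
have : @compact pY K by exact: cK.
rewrite E; exact. Qed.
End PY.

Lemma openN (X Y : topologicalType) (W : set (X * Y)) x y :
  open W -> W (x, y) -> exists G H, [/\ open G, open H, G x, H y & G `*` H `<=` W].
Proof.
move=> oW Wxy; have : nbhs (x, y) W by apply: open_nbhs_nbhs.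
case/prodN => Q [R [hQ [hR sub]]].
move: hQ; rewrite nbhsE => -[G [oG Gx] sG].
move: hR; rewrite nbhsE => -[H [oH Hy] sH].
exists G, H; split => // -[p q] [/= Gp Hq]; apply: sub; split; [exact: sG|exact: sH].
Qed.

Lemma tube (X Y : topologicalType) (A : set X) (B : set Y) (U : set (set (X * Y))) :
  U `<=` open -> closure (A `*` B) `<=` \bigcup_(W in U) W ->
  compact [set: Y] -> Y -> forall x, closure A x ->
  exists O F, [/\ open O, O x, finite_set F, F `<=` U &
    forall p q b, O p -> O q -> closure B b -> exists2 W, F W & W (p, b) /\ W (q, b)].
Proof.
move=> Uop Ucov cY y0 x cAx.
have : forall b : Y, exists t : set (X * Y) * set X * set Y, closure B b ->
    [/\ U t.1.1, open t.1.2, open t.2, t.1.2 x /\ t.2 b & t.1.2 `*` t.2 `<=` t.1.1].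
  move=> b; have [cBb|ncBb] := pselect (closure B b); last first.
    by exists (setT, setT, setT).
  have [W UW Wxb] := Ucov _ (@closure_prod X Y A B x b cAx cBb).
  have [G [H [oG oH Gx Hb sub]]] := @openN X Y W x b (Uop _ UW) Wxb.
  by exists (W, G, H).
case/choice => t ht.
have cBc : compact (closure B).
  apply: (@subclosed_compact Y (closure B) setT); [exact: closed_closure|exact: cY|by []].
have {}cBc : cover_compact (closure B) by exact: (@compact_cover_Y Y y0 _ cBc).
have [D' sD' cov] : finite_subset_cover (closure B) (fun b => (t b).2) (closure B).
  apply: cBc.
    by move=> b hb; have [_ _ ? _ _] := ht b hb.
  by move=> b hb; have [_ _ _ [_ ?] _] := ht b hb; exists b.
have nI : nbhs x (\bigcap_(i in [set` D']) (t i).1.2).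
  apply: filter_bigI => i iD; have /set_mem hi := sD' i iD.
  have [_ ? _ [? _] _] := ht i hi.
  by apply: open_nbhs_nbhs; split.
move: nI; rewrite nbhsE; case=> O [oO Ox] sO.
exists O, ((fun b => (t b).1.1) @` [set` D']); split => //.
- exact/finite_image/finite_fset.
- by move=> _ [b /sD' /set_mem hb <-]; have [] := ht b hb.
- move=> p q b Op Oq cBb; have [i Di Hib] := cov _ cBb.
  have /set_mem hi := sD' _ Di.
  have [_ _ _ _ sub] := ht i hi.
  exists (t i).1.1; first by exists i.
  split; apply: sub; split => //=; exact: (sO _ _ i Di).
Qed.

Theorem theorem3p17 (X Y : topologicalType) :
  set_star_Hurewicz X -> compact [set: Y] -> rectangular_set_star_Hurewicz X Y.
Proof.
move=> hX cY A B [[a0 b0] [Aa0 Bb0]]; rewrite /SSH_condition => U Uop Ucov.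
have : forall n (x : X), exists OF : set X * set (set (X * Y)), closure A x ->
  [/\ open OF.1, OF.1 x, finite_set OF.2, OF.2 `<=` U n &
    forall p q b, OF.1 p -> OF.1 q -> closure B b ->
       exists2 W, OF.2 W & W (p, b) /\ W (q, b)].
  move=> n x; have [cAx|ncAx] := pselect (closure A x); last by exists (setT, set0) => /ncAx.
  have [Z1 [F1 H1]] := @tube X Y A B (U n) (Uop n) (Ucov n) cY b0 x cAx.
  by exists (Z1, F1).
move=> h.
have [OF hOF] := choice (fun n => let: existT f hf := choice (h n) in ex_intro _ f hf).
pose OO n := [set (OF n x).1 | x in closure A].
have [V' [hV'1 hV'2]] : exists V' : nat -> set (set X),
    (forall n, finite_set (V' n) /\ V' n `<=` OO n) /\
    (forall x, A x -> exists N : nat, forall n : nat, (N <= n)%N ->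
          St (\bigcup_(W in V' n) W) (OO n) x).
  apply: (hX A (ex_intro _ a0 Aa0) OO).
    by move=> n _ [x cAx <-]; have [] := hOF n x cAx.
  move=> n x cAx; have [_ ? _ _ _] := hOF n x cAx.
  by exists (OF n x).1 => //; exists x.
have : forall n (O : set X), exists x, V' n O -> closure A x /\ O = (OF n x).1.
  move=> n O; have [VO|nVO] := pselect (V' n O); last by exists a0 => /nVO.
  by have [_ /(_ _ VO) [x cAx <-]] := hV'1 n; exists x.
move=> h2.
have [px hpx] := choice (fun n => let: existT f hf := choice (h2 n) in ex_intro _ f hf).
exists (fun n => \bigcup_(O in V' n) (OF n (px n O)).2); split.
  move=> n; split.
    apply: bigcup_finite; first by case: (hV'1 n).
    by move=> Q VO; have [cAx _] := hpx n Q VO; have [] := hOF n _ cAx.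
  move=> W [Q VO FW]; have [cAx _] := hpx n Q VO.
  by have [_ _ _ sub _] := hOF n _ cAx; exact: sub.
move=> [a b] [Aa Bb]; have [N hN] := hV'2 a Aa.
exists N => n Nn; have := hN n Nn; rewrite /St.
case=> Q [[y cAy eQ] [p [Op [R2 VR2 R2p]]]] Oa; subst Q.
have [cAx eR2] := hpx n R2 VR2.
have cBb : closure B b by exact: subset_closure.
have [_ _ _ sUy Qy] := hOF n y cAy.
have [_ _ _ _ Qx] := hOF n _ cAx.
have [W FW [Wpb Wab]] := Qy p a b Op Oa cBb.
rewrite eR2 in R2p.
have [W' FW' [W'pb _]] := Qx p p b R2p R2p cBb.
exists W; last by [].
split; first exact: sUy.
exists (p, b); split => //; exists W'; last by [].
by exists R2.
Qed.
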